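(* For every pair $(k,\ell)$ of positive integers and every prime power $q$, there are only finitely many (up to isomorphism) simple, cosimple, $GF(q)$-representable matroids that are $(k,\ell)$-uniform.
   Context: For positive integers $k,\ell$, a matroid is called $(k,\ell)$-uniform if it has no minor isomorphic to $U_{k,k}\oplus U_{0,\ell}$ (the direct sum of a $k$-element free matroid and $\ell$ loops). A matroid is cosimple if its dual is simple. *)

(* Defs.v *)
From HB Require Import structures.
From mathcomp Require Import all_boot all_order all_algebra all_field.

Set Implicit Arguments.
Unset Strict Implicit.
Unset Printing Implicit Defensive.

Import GRing.Theory.
Local Open Scope ring_scope.

(* A matroid on the finite ground set T (the whole type), given by its
   independent sets. *)
Record matroid (T : finType) := Matroid {
  indep : {set T} -> bool;
  indep0 : indep set0;
  indep_sub : forall X Y : {set T}, X \subset Y -> indep Y -> indep X;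
  indep_aug : forall X Y : {set T}, indep X -> indep Y -> (#|X| < #|Y|)%N ->
      exists2 y, y \in Y :\: X & indep (y |: X)
}.

Definition rk (T : finType) (M : matroid T) (X : {set T}) : nat :=
  \max_(Y : {set T} | (Y \subset X) && indep M Y) #|Y|.

(* Simple: no loops and no parallel pairs, i.e. every set of size <= 2 is
   independent. *)
Definition simple (T : finType) (M : matroid T) : Prop :=
  forall X : {set T}, (#|X| <= 2)%N -> indep M X.

(* Independent sets of the dual matroid: X is coindependent iff its
   complement spans, i.e. contains a basis. *)
Definition coindep (T : finType) (M : matroid T) (X : {set T}) : bool :=
  rk M (~: X) == rk M setT.

Definition cosimple (T : finType) (M : matroid T) : Prop :=
  forall X : {set T}, (#|X| <= 2)%N -> coindep M X.

Definition miso (T T' : finType) (M : matroid T) (N : matroid T') : Prop :=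
  exists f : T -> T', bijective f /\
    forall X : {set T}, indep N (f @: X) = indep M X.

(* M has a minor isomorphic to the matroid on T' with independence
   predicate indN: there are disjoint C (contracted) and D (deleted) and a
   bijection f from T' onto the remaining ground set E - (C u D), such that
   X is independent in N iff f(X) is independent in M / C \ D, where
   I (disjoint from C) is independent in M / C iff r(I u C) = |I| + r(C). *)
Definition has_minor (T T' : finType) (M : matroid T)
    (indN : {set T'} -> bool) : Prop :=
  exists (C D : {set T}) (f : T' -> T),
    [/\ [disjoint C & D], injective f,
        f @: [set: T'] = ~: (C :|: D) &
        forall X : {set T'},
          indN X = (rk M (f @: X :|: C) == #|X| + rk M C)%N].

(* The matroid U_{k,k} (+) U_{0,l} on 'I_(k+l): elements < k are free,
   the remaining l elements are loops. *)
Definition free_plus_loops (k l : nat) (X : {set 'I_(k + l)}) : bool :=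
  X \subset [set i : 'I_(k + l) | (i < k)%N].

Definition kl_uniform (k l : nat) (T : finType) (M : matroid T) : Prop :=
  ~ has_minor M (@free_plus_loops k l).

(* GF(q)-representable: there is a field F with q elements and vectors
   v e (e in T) in F^n such that X is independent iff (v e)_{e in X} is
   linearly independent (as a family, so no repetitions). *)
Definition representable (q : nat) (T : finType) (M : matroid T) : Prop :=
  exists (F : finFieldType) (n : nat) (v : T -> 'rV[F]_n),
    #|F| = q /\
    forall X : {set T}, indep M X = free [seq v x | x <- enum X].

Definition prime_power (q : nat) : Prop :=
  exists p e : nat, [/\ prime p, (0 < e)%N & q = (p ^ e)%N].

(* Main.v *)
Require Import Defs.
From mathcomp Require Import all_boot all_order all_algebra all_field.
Set Warnings "-all".
Set Implicit Arguments.
Unset Strict Implicit.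
Unset Printing Implicit Defensive.
Import GRing.Theory.

Section Rep.
Variables (F : fieldType) (n : nat) (T : finType) (v : T -> 'rV[F]_n).
Local Open Scope ring_scope.

Definition sp (A : {set T}) : {vspace 'rV[F]_n} := <<[seq v x | x <- enum A]>>%VS.

Lemma mem_sp (A : {set T}) x : x \in A -> v x \in sp A.
Proof. by move=> xA; apply: memv_span; apply: map_f; rewrite mem_enum. Qed.

Lemma sp_subP (A : {set T}) (U : {vspace 'rV[F]_n}) :
  reflect (forall x, x \in A -> v x \in U) (sp A <= U)%VS.
Proof.
apply: (iffP span_subvP) => [H x xA|H y /mapP[x]].
  by apply: H; apply: map_f; rewrite mem_enum.
by rewrite mem_enum => xA ->; apply: H.
Qed.

Lemma spS (A B : {set T}) : A \subset B -> (sp A <= sp B)%VS.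
Proof. by move=> /subsetP AB; apply/sp_subP => x /AB; apply: mem_sp. Qed.

Lemma dim_sp (A : {set T}) : (\dim (sp A) <= #|A|)%N.
Proof. by rewrite (leq_trans (dim_span _)) // size_map cardE. Qed.

Lemma free_spE (A : {set T}) : free [seq v x | x <- enum A] = (\dim (sp A) == #|A|).
Proof. by rewrite /free size_map cardE. Qed.

Lemma free_setU1 (A : {set T}) x : x \notin A ->
  free [seq v y | y <- enum (x |: A)] =
  (v x \notin sp A) && free [seq v y | y <- enum A].
Proof.
move=> xA; rewrite -free_cons; apply: perm_free.
have -> : v x :: [seq v y | y <- enum A] = [seq v y | y <- x :: enum A] by [].
apply: perm_map; apply: uniq_perm; first exact: enum_uniq.
  by rewrite /= mem_enum xA enum_uniq.
by move=> y; rewrite mem_enum in_setU1 inE mem_enum.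
Qed.

Lemma sp_vanish (psi : 'rV[F]_n -> F) (A : {set T}) y :
  (forall a y z, psi (a *: y + z) = a * psi y + psi z) ->
  (forall x, x \in A -> psi (v x) = 0) -> y \in sp A -> psi y = 0.
Proof.
move=> lin H yA.
have psi0 : psi 0 = 0.
  have := lin 1 0 0; rewrite scale1r addr0 mul1r => h.
  by apply: (addrI (psi 0)); rewrite addr0 -h.
have psiZ a z : psi (a *: z) = a * psi z.
  by have := lin a z 0; rewrite addr0 psi0 addr0.
have psiD a z : psi (a + z) = psi a + psi z.
  by have := lin 1 a z; rewrite scale1r mul1r.
rewrite /sp in yA; rewrite (coord_span (X := in_tuple _) yA); set S := in_tuple _.
rewrite (big_morph psi psiD psi0) big1 // => i _.
have Si : S`_i \in [seq v x | x <- enum A].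
  by apply: mem_nth; exact: (ltn_ord i).
rewrite psiZ; move: Si.
by case/mapP=> x; rewrite mem_enum => xA ->; rewrite H // mulr0.
Qed.

End Rep.

Section Mat.
Variables (F : fieldType) (n : nat) (T : finType) (M : matroid T)
  (v : T -> 'rV[F]_n).
Hypothesis hrep : forall X : {set T}, indep M X = free [seq v x | x <- enum X].
Local Open Scope ring_scope.
Local Notation sp := (sp v).

Lemma indepE (X : {set T}) : indep M X = (\dim (sp X) == #|X|).
Proof. by rewrite hrep free_spE. Qed.

Lemma rk_le_dim (A : {set T}) : (rk M A <= \dim (sp A))%N.
Proof.
apply/bigmax_leqP => Y /andP[YA iY].
by move: iY; rewrite indepE => /eqP <-; apply: dimvS; apply: spS.
Qed.

Lemma rk_ge (Y A : {set T}) : Y \subset A -> indep M Y -> (#|Y| <= rk M A)%N.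
Proof.
move=> YA iY; rewrite /rk.
exact: (@leq_bigmax_cond _ (fun Y : {set T} => (Y \subset A) && indep M Y) (fun Y : {set T} => #|Y|) Y (introT andP (conj YA iY))).
Qed.

Lemma rk_indep (A : {set T}) : indep M A -> rk M A = #|A|.
Proof.
move=> iA; apply/eqP; rewrite eqn_leq rk_ge // andbT.
exact: leq_trans (rk_le_dim A) (dim_sp v A).
Qed.

Lemma indep_U1 (A : {set T}) x : x \notin A -> indep M A -> v x \notin sp A -> indep M (x |: A).
Proof. by move=> xA iA vx; rewrite hrep free_setU1 // vx -hrep. Qed.

Lemma minor_of k l (Z : {set T}) (f : 'I_(k + l) -> T) :
  injective f -> (forall x, f x \notin Z) ->
  indep M (Z :|: f @: [set x : 'I_(k + l) | (x < k)%N]) ->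
  (forall x : 'I_(k + l), (k <= x)%N -> v (f x) \in sp Z) ->
  has_minor M (@free_plus_loops k l).
Proof.
move=> finj fZ iZA loops.
have iZ : indep M Z by apply: (indep_sub _ iZA); apply: subsetUl.
exists Z, (~: (Z :|: f @: setT)), f; split => //.
- rewrite disjoint_subset; apply/subsetP => y yZ; by rewrite !inE yZ.
- apply/setP => y; rewrite !inE negb_or negbK.
  case: (boolP (y \in f @: setT)) => [/imsetP[x _ ->]|]; first by rewrite fZ orbT.
  by move=> H; rewrite orbF; case: (y \in Z).
move=> X; rewrite (rk_indep iZ) /free_plus_loops.
case: (boolP (X \subset _)) => XS.
  have dj : [disjoint f @: X & Z].
    by rewrite disjoint_subset; apply/subsetP => y /imsetP[x _ ->]; rewrite inE fZ.
  rewrite rk_indep.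
    rewrite cardsU (disjoint_setI0 dj) cards0 subn0 card_imset // eqxx //.
  apply: (indep_sub (m := M) _ iZA). rewrite setUC setUS //; apply: imsetS.
  by apply/subsetP => x /(subsetP XS); rewrite !inE.
have [x0 x0X kx0] : exists2 x0, x0 \in X & (k <= x0)%N.
  move: XS => /subsetPn[x0 x0X]; rewrite inE -leqNgt => ?; by exists x0.
apply/esym/negbTE; rewrite neq_ltn; apply/orP; left.
apply: (leq_ltn_trans (rk_le_dim _)).
apply: (@leq_ltn_trans (\dim (sp ((f @: X :\ f x0) :|: Z)))).
  apply: dimvS; apply/sp_subP => y; rewrite in_setU => /orP[].
    case: (eqVneq y (f x0)) => [-> _|ne yX].
      apply: subvP (loops _ kx0); apply: spS; exact: subsetUr.
    by apply: mem_sp; rewrite !inE ne yX.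
  by move=> yZ; apply: mem_sp; rewrite inE yZ orbT.
apply: (leq_ltn_trans (dim_sp _ _)).
apply: (leq_ltn_trans (leq_card_setU _ _).1); rewrite ltn_add2r.
rewrite -(card_imset X finj) [ltnRHS](cardsD1 (f x0)) imset_f //.
Qed.

End Mat.

Lemma pigeon (I U : finType) (g : I -> U) c :
  (c * #|U| < #|I|)%N -> exists u, (c < #|[set i | g i == u]|)%N.
Proof.
move=> H; case: (boolP [exists u, (c < #|[set i | g i == u]|)%N]) => [/existsP//|/existsPn H2].
move: H; rewrite ltnNge => /negP; case.
rewrite -sum1_card (partition_big g xpredT) //=.
rewrite mulnC -sum_nat_const; apply: leq_sum => u _.
move: (H2 u); rewrite -leqNgt => H3; apply: leq_trans H3.
by rewrite -sum1_card; apply: eq_leq; apply: eq_bigl => i; rewrite inE.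
Qed.

Section Minor2.
Variables (F : fieldType) (n : nat) (T : finType) (M : matroid T)
  (v : T -> 'rV[F]_n).
Hypothesis hrep : forall X : {set T}, indep M X = free [seq v x | x <- enum X].

Lemma minor_of2 k l (Z : {set T}) (fa : 'I_k -> T) (fl : 'I_l -> T) :
  injective fa -> injective fl -> (forall j j', fa j != fl j') ->
  (forall j, fa j \notin Z) -> (forall j, fl j \notin Z) ->
  indep M (Z :|: [set fa j | j in setT]) ->
  (forall j, v (fl j) \in sp v Z) ->
  has_minor M (@free_plus_loops k l).
Proof.
move=> ia il d nZa nZl iZ lo.
pose ff (x : 'I_k + 'I_l) := match x with inl j => fa j | inr j => fl j end.
have iff : injective ff.
  move=> [j|j] [j'|j'] /= h.
  - by rewrite (ia _ _ h).
  - by move: (d j j'); rewrite h eqxx.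
  - by move: (d j' j); rewrite h eqxx.
  - by rewrite (il _ _ h).
apply: (@minor_of F n T M v hrep k l Z (ff \o split)).
- by apply: inj_comp => //; apply: (can_inj splitK).
- by move=> x /=; case: (split x).
- apply: (indep_sub _ iZ); apply: setUS; apply/subsetP => y /imsetP[x].
  rewrite inE /=; case: splitP => // j _ _ ->; exact: imset_f.
- move=> x /=; case: splitP => j.
    by move=> -> kj; move: (ltn_ord j); rewrite ltnNge kj.
  by move=> _ _; apply: lo.
Qed.
End Minor2.

Section Bound.
Variables (F : finFieldType) (n : nat) (T : finType) (M : matroid T)
  (v : T -> 'rV[F]_n).
Hypothesis hrep : forall X : {set T}, indep M X = free [seq v x | x <- enum X].
Local Open Scope ring_scope.
Local Notation sp := (sp v).

Definition B : {set T} := [arg max_(Y > set0 | indep M Y) #|Y|].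

Lemma B_max : indep M B /\ forall Y, indep M Y -> (#|Y| <= #|B|)%N.
Proof. by rewrite /B; case: arg_maxnP; [exact: indep0 | move=> Y iY H; split]. Qed.

Lemma iB : indep M B. Proof. by case: B_max. Qed.
Lemma maxB Y : indep M Y -> (#|Y| <= #|B|)%N. Proof. by case: B_max => _; apply. Qed.

Lemma allin x : v x \in sp B.
Proof.
case: (boolP (x \in B)) => xB; first exact: mem_sp.
apply/negPn/negP => vx.
have := maxB (indep_U1 hrep xB iB vx).
by rewrite cardsU1 xB add1n ltnn.
Qed.

Lemma indep_le Y : indep M Y -> (#|Y| <= #|B|)%N.
Proof. exact: maxB. Qed.

Definition bb (i : 'I_#|B|) : T := enum_val i.
Lemma bbB i : bb i \in B. Proof. exact: enum_valP. Qed.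
Lemma bb_inj : injective bb. Proof. exact: enum_val_inj. Qed.
Lemma bb_onto x : x \in B -> exists i, x = bb i.
Proof. by move=> xB; exists (enum_rank_in xB x); rewrite /bb enum_rankK_in. Qed.

Definition Bt : #|B|.-tuple 'rV[F]_n := [tuple v (bb i) | i < #|B|].
Lemma Bt_nth (i : 'I_#|B|) : Bt`_i = v (bb i).
Proof. by rewrite -tnth_nth tnth_mktuple. Qed.

Lemma span_Bt : <<Bt>>%VS = sp B.
Proof.
apply: eq_span => y; apply/idP/idP.
  case/mapP=> i _ ->; apply: map_f; rewrite mem_enum; exact: bbB.
case/mapP=> x; rewrite mem_enum => /bb_onto[i ->] ->.
by apply/mapP; exists i; rewrite ?mem_enum.
Qed.

Lemma free_Bt : free Bt.
Proof. by rewrite /free span_Bt size_tuple -(indepE hrep) iB. Qed.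

Definition c (i : 'I_#|B|) : 'rV[F]_n -> F := coord Bt i.

Lemma c_bb i j : c i (v (bb j)) = (j == i)%:R.
Proof. by rewrite /c -Bt_nth (coord_free _ _ free_Bt) eq_sym. Qed.

Lemma c_lin i a y z : c i (a *: y + z) = a * c i y + c i z.
Proof. rewrite /c linearP; reflexivity. Qed.

Lemma expand y : y \in sp B -> y = \sum_i c i y *: v (bb i).
Proof.
rewrite -span_Bt => /coord_span h; rewrite {1}h; apply: eq_bigr => i _.
by rewrite Bt_nth.
Qed.

Lemma kernel (J : {set 'I_#|B|}) y : y \in sp B ->
  (forall i, i \in J -> c i y = 0) -> y \in sp (B :\: bb @: J).
Proof.
move=> yB H; rewrite (expand yB); apply: memv_suml => i _.
case: (boolP (i \in J)) => iJ; first by rewrite H // scale0r mem0v.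
apply: memvZ; apply: mem_sp; rewrite inE bbB andbT mem_imset //; exact: bb_inj.
Qed.

Lemma vanish i0 y : y \in sp (B :\ bb i0) -> c i0 y = 0.
Proof.
apply: sp_vanish; first exact: c_lin.
move=> x; rewrite !inE => /andP[xi /bb_onto[j xj]]; subst x.
rewrite c_bb; case: eqP => // ji; subst j; by rewrite eqxx in xi.
Qed.

Lemma fiber p (e : 'I_p -> T) k :
  (k * #|F| ^ p < #|B|)%N ->
  exists (J : {set 'I_#|B|}) (u : 'I_p -> F),
    (k < #|J|)%N /\ forall i, i \in J -> forall t, c i (v (e t)) = u t.
Proof.
move=> H.
have P : (k * #|{ffun 'I_p -> F}| < #|'I_#|B| |)%N by rewrite card_ffun !card_ord.
have [u Hu] := pigeon (fun i => [ffun t => c i (v (e t))]) P.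
exists [set i | [ffun t => c i (v (e t))] == u], u; split => // i.
by rewrite inE => /eqP <- t; rewrite ffunE.
Qed.

End Bound.

Section Bound2.
Variables (F : finFieldType) (n : nat) (T : finType) (M : matroid T)
  (v : T -> 'rV[F]_n).
Hypothesis hrep : forall X : {set T}, indep M X = free [seq v x | x <- enum X].
Variables (k l : nat).
Hypothesis hk : (0 < k)%N.
Hypothesis hsimple : simple M.
Hypothesis hcosimple : cosimple M.
Hypothesis hunif : kl_uniform k l M.
Local Open Scope ring_scope.
Local Notation sp := (sp v).
Local Notation B := (B M).
Local Notation bb := (@bb T M).
Local Notation c := (@c F n T M v).

Lemma q0 : (0 < #|F|)%N.
Proof. by apply/card_gt0P; exists 0. Qed.

Lemma caseA : (#|~: B| <= l)%N -> (#|B| <= k * #|F| ^ l.+1)%N.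
Proof.
move=> Hm; rewrite leqNgt; apply/negP => H.
have H' : (k * #|F| ^ #|~: B| < #|B|)%N.
  apply: leq_ltn_trans H; apply: leq_mul => //; apply: leq_pexp2l; [exact: q0 | exact: leqW].
have [J [u [kJ Hu]]] := fiber v (fun t : 'I_#|~: B| => enum_val t) H'.
have [i iJ] : exists i, i \in J.
  by apply/card_gt0P; apply: leq_ltn_trans kJ.
have [i' i'J] : exists i', i' \in J :\ i.
  apply/card_gt0P; move: kJ; rewrite (cardsD1 i) iJ add1n ltnS.
  by apply: leq_trans.
move: i'J; rewrite !inE => /andP[ii' i'J].
pose X := [set bb i; bb i'].
have := hcosimple (X := X); rewrite cards2 ltnS leq_b1 => /(_ isT).
rewrite /coindep => /eqP; apply/eqP; rewrite neq_ltn; apply/orP; left.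
apply: (@leq_trans #|B|); last by apply: rk_ge; [exact: subsetT | exact: iB].
rewrite /rk; case: (posnP #|B|) => [B0|Bpos].
  by move: (ltn_ord i); rewrite {2}B0.
rewrite -(prednK Bpos) ltnS; apply/bigmax_leqP => W /andP[WX iW].
rewrite -ltnS (prednK Bpos).
pose psi y := c i y - c i' y.
have lin a y z : psi (a *: y + z) = a * psi y + psi z.
  by rewrite /psi !c_lin mulrBr opprD addrACA.
have van x : x \in W -> psi (v x) = 0.
  move=> /(subsetP WX); rewrite !inE negb_or => /andP[xi xi'].
  case: (boolP (x \in B)) => xB.
    case/bb_onto: xB => j xj; subst x; rewrite /psi !(c_bb hrep).
    have -> : (j == i) = false by apply/negbTE; apply: contra xi => /eqP ->.
    have -> : (j == i') = false by apply/negbTE; apply: contra xi' => /eqP ->.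
    by rewrite subrr.
  have xnB : x \in ~: B by rewrite inE.
  rewrite /psi -(enum_rankK_in xnB xnB) Hu // Hu // subrr //.
have bW : bb i \notin W.
  by apply/negP => /(subsetP WX); rewrite !inE eqxx.
have vW : v (bb i) \notin sp W.
  apply/negP => /(sp_vanish lin van); rewrite /psi !(c_bb hrep) eqxx.
  by rewrite eq_sym (negbTE ii') subr0 => /eqP; rewrite oner_eq0.
have := indep_le (indep_U1 hrep bW iW vW).
by rewrite cardsU1 bW add1n.
Qed.


Lemma caseB : (l < #|~: B|)%N -> (#|B| <= k * #|F| ^ l.+1)%N.
Proof.
move=> hle; rewrite leqNgt; apply/negP => H.
pose e (t : 'I_l.+1) : T := enum_val (widen_ord hle t).
have eB t : e t \notin B.
  by have := enum_valP (widen_ord hle t); rewrite inE.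
have e_inj : injective e.
  by move=> t t' /enum_val_inj /(congr1 val) /= /val_inj.
have [J [u [kJ Hu]]] := fiber v e H.
have [i0 i0J] : exists i, i \in J.
  by apply/card_gt0P; apply: leq_ltn_trans kJ.
have hk' : (k <= #|J :\ i0|)%N.
  by move: kJ; rewrite (cardsD1 i0) i0J add1n ltnS.
pose a (j : 'I_k) : 'I_#|B| := enum_val (widen_ord hk' j).
have aJ j : a j \in J :\ i0 by apply: enum_valP.
have a_inj : injective a.
  by move=> j j' /enum_val_inj /(congr1 val) /= /val_inj.
pose s : 'I_l.+1 := if [pick t | u t != 0] is Some t then t else ord0.
have hs : u s != 0 \/ forall t, u t = 0.
  rewrite /s; case: pickP => [t ht|H0]; first by left.
  by right => t; move: (H0 t) => /negbFE/eqP.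
pose z := if u s != 0 then e s else bb i0.
have cz : c i0 (v z) != 0.
  rewrite /z; case: ifP => us; first by rewrite Hu.
  by rewrite (c_bb hrep) eqxx oner_eq0.
have zB : z \notin B :\ bb i0.
  rewrite /z; case: ifP => _; first by rewrite inE (negbTE (eB s)) andbF.
  by rewrite !inE eqxx.
have iB0 : indep M (z |: (B :\ bb i0)).
  apply: (indep_U1 hrep zB).
    by apply: (indep_sub _ (iB M)); apply: subsetDl.
  by apply/negP => /(vanish hrep) h; move: cz; rewrite h eqxx.
pose Z := z |: (B :\: bb @: J).
have ZB : Z \subset z |: (B :\ bb i0).
  apply: setUS; apply/subsetP => y; rewrite !inE => /andP[ny ->].
  rewrite andbT; apply: contra ny => /eqP ->; exact: imset_f.
apply: hunif.
apply: (@minor_of2 F n T M v hrep k l Z (fun j => bb (a j)) (fun j => e (lift s j))).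
- by move=> j j' /bb_inj /a_inj.
- by move=> j j' /e_inj /lift_inj.
- move=> j j'; apply/negP => /eqP h; move: (eB (lift s j')); rewrite -h.
  by rewrite bbB.
- move=> j; move: (aJ j); rewrite !inE => /andP[aj0 ajJ].
  rewrite negb_or; apply/andP; split.
    rewrite /z; case: ifP => _.
      by apply/negP => /eqP h; move: (eB s); rewrite -h bbB.
    by apply: contra aj0 => /eqP /bb_inj ->.
  by rewrite mem_imset ?ajJ //; exact: bb_inj.
- move=> j; rewrite !inE negb_or (negbTE (eB _)) andbF andbT.
  rewrite /z; case: ifP => _.
    by apply/negP => /eqP /e_inj h; move: (neq_lift s j); rewrite h eqxx.
  by apply/negP => /eqP h; move: (eB (lift s j)); rewrite h bbB.
- apply: (indep_sub _ iB0); rewrite subUset ZB andTb.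
  apply/subsetP => y /imsetP[j _ ->]; move: (aJ j); rewrite !inE => /andP[aj0 _].
  rewrite bbB andbT; apply/orP; right; apply: contra aj0 => /eqP /bb_inj ->.
  by [].
- move=> j; set t := lift s j.
  have spZ : (sp (B :\: bb @: J) <= sp Z)%VS by apply: spS; apply: subsetUr.
  case: hs => [us|u0].
    pose y := v (e t) - (u t / u s) *: v (e s).
    have yB : y \in sp (B :\: bb @: J).
      apply: kernel.
        by apply: memvB; [exact: allin | apply: memvZ; exact: allin].
      move=> i iJ; have := c_lin v i (- (u t / u s)) (v (e s)) (v (e t)).
      rewrite /y addrC scaleNr => ->; rewrite !Hu // mulNr mulfVK // addrC subrr //.
    have -> : v (e t) = y + (u t / u s) *: v z.
      by rewrite /y /z us subrK.
    apply: memvD; first exact: (subvP spZ).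
    by apply: memvZ; apply: mem_sp; rewrite /Z setU11.
  apply: (subvP spZ); apply: kernel; first exact: allin.
  by move=> i iJ; rewrite Hu // u0.
Qed.

Lemma rank_bound : (#|B| <= k * #|F| ^ l.+1)%N.
Proof. by case: (leqP #|~: B| l) => h; [exact: caseA | exact: caseB]. Qed.

Lemma size_bound : (#|T| <= #|F| ^ (k * #|F| ^ l.+1))%N.
Proof.
apply: (@leq_trans (#|F| ^ #|B|)); last by apply: leq_pexp2l; [exact: q0 | exact: rank_bound].
pose h x : {ffun 'I_#|B| -> F} := [ffun i => c i (v x)].
have hinj : injective h.
  move=> x y hxy.
  have vxy : v x = v y.
    rewrite (expand (allin hrep x)) (expand (allin hrep y)).
    by apply: eq_bigr => i _; move/ffunP: hxy => /(_ i); rewrite !ffunE => ->.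
  apply/eqP; apply/negP => /negP nxy.
  have := hsimple (X := [set x; y]); rewrite cards2 nxy => /(_ isT).
  rewrite (indepE hrep) cards2 nxy => /eqP h2.
  have : (\dim (sp [set x; y]) <= 1)%N.
    have sub : (sp [set x; y] <= <[v x]>)%VS.
      by apply/sp_subP => w; rewrite !inE => /orP[] /eqP ->; rewrite ?vxy memv_line.
    by apply: leq_trans (dimvS sub) _; rewrite dim_vline leq_b1.
  by rewrite h2.
by have := leq_card h hinj; rewrite card_ffun card_ord.
Qed.

End Bound2.

From Stdlib Require Import ClassicalEpsilon.

Section Final.

Definition mat_axioms (T : finType) (P : {set T} -> bool) : Prop :=
  P set0 /\ (forall X Y : {set T}, X \subset Y -> P Y -> P X) /\
  (forall X Y : {set T}, P X -> P Y -> (#|X| < #|Y|)%N ->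
      exists2 y, y \in Y :\: X & P (y |: X)).

Lemma def_ax (T : finType) : mat_axioms (fun X : {set T} => X == set0).
Proof.
split; first exact: eqxx.
split; first by move=> X Y XY /eqP Y0; move: XY; rewrite Y0 subset0.
by move=> X Y /eqP -> /eqP ->; rewrite cards0.
Qed.

Definition mk (T : finType) (P : {set T} -> bool) (h : mat_axioms P) : matroid T :=
  Matroid (proj1 h) (proj1 (proj2 h)) (proj2 (proj2 h)).

Definition build (T : finType) (P : {set T} -> bool) : matroid T :=
  match excluded_middle_informative (mat_axioms P) with
  | left h => mk h
  | right _ => mk (def_ax T)
  end.

Lemma build_indep (T : finType) (P : {set T} -> bool) :
  mat_axioms P -> indep (build P) = P.
Proof. by rewrite /build => h; case: excluded_middle_informative. Qed.

Definition II (N : nat) : finType := {nn : 'I_N.+1 & {set {set 'I_nn}}}.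

Definition LL (N : nat) (i : 'I_#|II N|) : {n : nat & matroid 'I_n} :=
  let x := enum_val i in
  existT (fun n => matroid 'I_n) (nat_of_ord (tag x))
    (build (fun X => X \in tagged x)).

Lemma listing (N : nat) (T : finType) (M : matroid T) :
  (#|T| <= N)%N -> exists i : 'I_#|II N|, miso M (projT2 (LL i)).
Proof.
move=> hT.
pose g : T -> 'I_#|T| := enum_rank.
have ginj : injective g by apply: enum_rank_inj.
pose S : {set {set 'I_#|T|}} := [set X : {set 'I_#|T|} | indep M (g @^-1: X)].
have hT' : (#|T| < N.+1)%N by [].
pose x : II N := Tagged (fun nn : 'I_N.+1 => {set {set 'I_nn}}) (i := Ordinal hT') S.
exists (enum_rank x); rewrite /LL enum_rankK /=.
have cardpre (X : {set 'I_#|T|}) : #|g @^-1: X| = #|X|.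
  apply: on_card_preimset; exists enum_val => y _; [exact: enum_rankK | exact: enum_valK].
have ax : mat_axioms (fun X => X \in S).
  split; first by rewrite inE preimset0 indep0.
  split.
    by move=> X Y XY; rewrite !inE; apply: indep_sub; apply: preimsetS.
  move=> X Y; rewrite !inE => iX iY XY.
  have XY' : (#|g @^-1: X| < #|g @^-1: Y|)%N by rewrite !cardpre.
  have [y yD iy] := indep_aug iX iY XY'.
  exists (g y); first by move: yD; rewrite !inE.
  rewrite inE; suff -> : g @^-1: (g y |: X) = y |: g @^-1: X by [].
  by apply/setP => w; rewrite !inE (inj_eq ginj).
exists g; split.
  by exists enum_val; [exact: enum_rankK | exact: enum_valK].
move=> X; rewrite build_indep // inE.
suff -> : g @^-1: (g @: X) = X by [].
by apply/setP => w; rewrite inE mem_imset.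
Qed.

End Final.

Unset Implicit Arguments.
Set Strict Implicit.

Theorem theorem1p1 (k l q : nat) :
  (0 < k)%N -> (0 < l)%N -> prime_power q ->
  exists (m : nat) (L : 'I_m -> {n : nat & matroid 'I_n}),
    forall (T : finType) (M : matroid T),
      simple M -> cosimple M -> representable q M -> kl_uniform k l M ->
      exists i : 'I_m, miso M (projT2 (L i)).
Proof.
move=> hk _ _.
exists #|II (q ^ (k * q ^ l.+1))|, (@LL _) => T M hs hcs [F [n [v [hq hrep]]]] hu.
apply: listing; rewrite -hq.
exact: (size_bound hrep hk hs hcs hu).
Qed.
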